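(* Let $T\subset\mathbb{R}^3$ be a nondegenerate tetrahedron with vertices $\mathbf v_1,\dots,\mathbf v_4$ and faces $F_j$ opposite $\mathbf v_j$; let $\mathcal I_j(p)=\frac1{|F_j|}\int_{F_j}p\,d\mathbf x$, $j=1,\dots,4$. For $1\le i<j\le4$ let $x_{ij}(t)=(1-t)\mathbf v_i+t\mathbf v_j$, $t\in[0,1]$, let $\omega_{ij}$ be a probability density on $[0,1]$, and let $q_{ij}$ be a polynomial of degree at most 2 on $[0,1]$ with $\int_0^1 q_{ij}(t)\phi(t)\omega_{ij}(t)\,dt=0$ for every affine $\phi$. Define $\mathcal L_{ij}(p)=\int_0^1p(x_{ij}(t))\,q_{ij}(t)\,\omega_{ij}(t)\,dt$ for $p\in\mathbb{P}_2(T)$, and $\Sigma^{\mathrm{ef}}=\{\mathcal I_j:j=1,\dots,4\}\cup\{\mathcal L_{ij}:1\le i<j\le4\}$. Then the triple $(T,\mathbb{P}_2(T),\Sigma^{\mathrm{ef}})$ is unisolvent if and only if $\int_0^1t(1-t)\,q_{ij}(t)\,\omega_{ij}(t)\,dt\ne0$ for all $1\le i<j\le4$.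
   Context: $|F_j|$ is the area of $F_j$; $\mathbb{P}_2(T)$ is the space of polynomials of degree at most 2 on $T$. Unisolvent means the only $p\in\mathbb{P}_2(T)$ annihilated by all ten functionals of $\Sigma^{\mathrm{ef}}$ is $p=0$. *)

(* Defs.v *)
From HB Require Import structures.
From mathcomp Require Import all_boot all_order all_algebra.
From mathcomp Require Import all_classical all_reals all_analysis.
Set Implicit Arguments. Unset Strict Implicit. Unset Printing Implicit Defensive.
Import Order.TTheory GRing.Theory Num.Theory.
Import numFieldNormedType.Exports.
Local Open Scope classical_set_scope.
Local Open Scope ring_scope.

Section Defs.
Variable R : realType.

Notation leb := (@lebesgue_measure R).

Definition pt := 'rV[R]_3.

Definition nondegenerate_tet (v : 'I_4 -> pt) : Prop :=
  \det (\matrix_(k < 3, l < 3) (v (lift ord0 k) - v ord0) ord0 l) != 0.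

Definition isP2 (p : pt -> R) : Prop :=
  exists (a : R) (b : 'I_3 -> R) (c : 'I_3 -> 'I_3 -> R),
    forall x : pt, p x = a + \sum_(i < 3) b i * x ord0 i
                          + \sum_(i < 3) \sum_(j < 3) c i j * x ord0 i * x ord0 j.

(* Average (1/|F|) int_F p over the triangle F with vertices a, b, c,
   written through the affine parametrization of the reference triangle
   {(s,t) : s,t >= 0, s + t <= 1} (area 1/2; the Jacobian |F|*2 cancels
   against 1/|F|). *)
Definition tri_avg (a b c : pt) (p : pt -> R) : R :=
  2 * \int[leb]_(s in `[0, 1]%classic)
        \int[leb]_(t in `[0, 1 - s]%classic) p (a + s *: (b - a) + t *: (c - a)).

(* Face F_j opposite v_j has vertices v_(lift j k), k = 0,1,2. *)
Definition face_avg (v : 'I_4 -> pt) (j : 'I_4) (p : pt -> R) : R :=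
  tri_avg (v (lift j 0)) (v (lift j 1)) (v (lift j 2)) p.

Definition edge_pt (v : 'I_4 -> pt) (i j : 'I_4) (t : R) : pt :=
  (1 - t) *: v i + t *: v j.

Definition prob_density01 (w : R -> R) : Prop :=
  measurable_fun (`[0, 1]%classic : set R) w /\
  (forall t, t \in `[0, 1]%classic -> 0 <= w t) /\
  leb.-integrable `[0, 1]%classic (EFin \o w) /\
  \int[leb]_(t in `[0, 1]%classic) w t = 1.

Definition edge_functional (v : 'I_4 -> pt) (i j : 'I_4) (q : {poly R})
    (w : R -> R) (p : pt -> R) : R :=
  \int[leb]_(t in `[0, 1]%classic) (p (edge_pt v i j t) * q.[t] * w t).

Definition unisolvent_ef (v : 'I_4 -> pt) (q : 'I_4 -> 'I_4 -> {poly R})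
    (w : 'I_4 -> 'I_4 -> R -> R) : Prop :=
  forall p : pt -> R, isP2 p ->
    (forall j : 'I_4, face_avg v j p = 0) ->
    (forall i j : 'I_4, (i < j)%N -> edge_functional v i j (q i j) (w i j) p = 0) ->
    forall x : pt, p x = 0.

End Defs.

(* Main.v *)
Require Import Defs.
From HB Require Import structures.
From mathcomp Require Import all_boot all_order all_algebra.
From mathcomp Require Import all_classical all_reals all_analysis.
From mathcomp Require Import ring lra.
Import Order.TTheory GRing.Theory Num.Theory.
Import numFieldNormedType.Exports.
Local Open Scope classical_set_scope.
Local Open Scope ring_scope.

Section Ana.
Variable R : realType.
Notation leb := (@lebesgue_measure R).
Notation pt := (pt R).

Lemma poly_bounded01 (P : {poly R}) (a b : R) :
  [bounded P.[x] | x in `[a, b]%classic].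
Proof.
have cP : {within `[a, b]%classic, continuous (horner P)}.
  by apply: continuous_subspaceT => x; exact: continuous_horner.
have /compact_bounded[M [_ mrt]] := continuous_compact cP (@segment_compact _ a b).
by exists M; split; rewrite ?num_real // => ? ? ? ?; exact: mrt.
Qed.

Lemma int_polyw (P : {poly R}) (w : R -> R) :
  leb.-integrable `[0, 1]%classic (EFin \o w) ->
  leb.-integrable `[0, 1]%classic (EFin \o (fun t => P.[t] * w t)).
Proof.
move=> wi.
have := @integrableMr _ _ _ leb _ (measurable_itv _) (horner P) _ _ (poly_bounded01 P 0 1) wi.
have mP : measurable_fun (`[0, 1]%classic : set R) (horner P).
  by apply/measurable_funTS; apply: measurable_realfun.continuous_measurable_fun; exact/continuous_horner.
move=> /(_ mP).
by apply: eq_integrable => //= t _; rewrite EFinM.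
Qed.

Lemma int_poly_FTC (P F : {poly R}) (a b : R) : a <= b -> F^`() = P ->
  \int[leb]_(x in `[a, b]%classic) P.[x] = F.[b] - F.[a].
Proof.
rewrite le_eqVlt => /predU1P[<- _|ab dF].
  by rewrite set_itv1 Rintegral_set1 subrr.
rewrite /Rintegral (@continuous_FTC2 _ (horner P) (horner F))//=.
- by apply: continuous_subspaceT => x; exact: continuous_horner.
- split.
  + by move=> x _; exact: derivable_horner.
  + by apply: cvg_at_right_filter; exact: continuous_horner.
  + by apply: cvg_at_left_filter; exact: continuous_horner.
- by move=> x _; rewrite -derivE dF.
Qed.


Lemma int_cubic (a b d0 d1 d2 d3 : R) : a <= b ->
  \int[leb]_(x in `[a, b]%classic) (d0 + d1 * x + d2 * x ^+ 2 + d3 * x ^+ 3) =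
  (d0 * b + d1 / 2 * b ^+ 2 + d2 / 3 * b ^+ 3 + d3 / 4 * b ^+ 4) -
  (d0 * a + d1 / 2 * a ^+ 2 + d2 / 3 * a ^+ 3 + d3 / 4 * a ^+ 4).
Proof.
move=> ab.
pose P : {poly R} := d0%:P + d1 *: 'X + d2 *: 'X^2 + d3 *: 'X^3.
pose F : {poly R} := d0 *: 'X + (d1 / 2) *: 'X^2 + (d2 / 3) *: 'X^3 + (d3 / 4) *: 'X^4.
have -> : \int[leb]_(x in `[a, b]%classic) (d0 + d1 * x + d2 * x ^+ 2 + d3 * x ^+ 3)
   = \int[leb]_(x in `[a, b]%classic) P.[x].
  by apply: eq_Rintegral => x _; rewrite /P !hornerE.
rewrite (@int_poly_FTC P F) //; first by rewrite /F !hornerE.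
rewrite /F /P !poly.derivE /=.
apply/polyP => i; rewrite !coefE.
case: i => [|[|[|[|i]]]] /=; rewrite ?mulr0n ?mulr1n; try field.
all: by [].
Qed.


Lemma tri_quad (h : R -> R -> R) (c00 c10 c01 c20 c11 c02 : R) :
  (forall s t, h s t = c00 + c10 * s + c01 * t + c20 * s ^+ 2 + c11 * s * t + c02 * t ^+ 2) ->
  2 * \int[leb]_(s in `[0, 1]%classic) \int[leb]_(t in `[0, 1 - s]%classic) h s t
  = c00 + (c10 + c01) / 3 + (c20 + c02) / 6 + c11 / 12.
Proof.
move=> Hh.
pose d0 := c00 + c01 / 2 + c02 / 3.
pose d1 := c10 - c00 + c11 / 2 - c01 - c02.
pose d2 := c20 - c10 + c01 / 2 - c11 + c02.
pose d3 := - c20 + c11 / 2 - c02 / 3.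
rewrite (@eq_Rintegral _ _ _ leb _ (fun s => d0 + d1 * s + d2 * s ^+ 2 + d3 * s ^+ 3)).
  by rewrite int_cubic ?ler01 // /d0 /d1 /d2 /d3; field.
move=> s; rewrite inE /= in_itv /= => /andP[s0 s1].
rewrite (@eq_Rintegral _ _ _ leb _ (fun t => (c00 + c10 * s + c20 * s ^+ 2) + (c01 + c11 * s) * t
   + c02 * t ^+ 2 + 0 * t ^+ 3)).
  rewrite int_cubic; last by rewrite subr_ge0.
  by rewrite /d0 /d1 /d2 /d3; field.
by move=> t _; rewrite Hh; ring.
Qed.


Lemma int_polyw' (P : {poly R}) (w f : R -> R) :
  leb.-integrable `[0, 1]%classic (EFin \o w) ->
  (forall t, f t = P.[t] * w t) ->
  leb.-integrable `[0, 1]%classic (EFin \o f).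
Proof.
move=> wi Hf; have := @int_polyw P w wi.
by apply: eq_integrable => //= t _; rewrite Hf.
Qed.

Lemma edge_quad (g : R -> R) (c0 c1 c2 : R) (q : {poly R}) (w : R -> R) :
  prob_density01 w ->
  (forall a b : R, \int[leb]_(t in `[0, 1]%classic) (q.[t] * (a + b * t) * w t) = 0) ->
  (forall t, g t = c0 + c1 * t + c2 * t ^+ 2) ->
  \int[leb]_(t in `[0, 1]%classic) (g t * q.[t] * w t) =
  - c2 * \int[leb]_(t in `[0, 1]%classic) (t * (1 - t) * q.[t] * w t).
Proof.
move=> [_ [_ [wi _]]] Horth Hg.
rewrite (@eq_Rintegral _ _ _ leb _ (fun t => q.[t] * (c0 + (c1 + c2) * t) * w t
   - c2 * (t * (1 - t) * q.[t] * w t))); last first.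
  by move=> t _; rewrite Hg; ring.
have iK : leb.-integrable `[0, 1]%classic
    (EFin \o (fun t => t * (1 - t) * q.[t] * w t)).
  apply: (@int_polyw' ('X * (1 - 'X) * q) w) => // t.
  by rewrite !hornerE; ring.
rewrite RintegralB //.
- by rewrite Horth RintegralZl // sub0r mulNr.
- apply: (@int_polyw' (q * (c0%:P + (c1 + c2) *: 'X)) w) => // t.
  by rewrite !hornerE; ring.
- apply: (@int_polyw' (c2%:P * ('X * (1 - 'X) * q)) w) => // t.
  by rewrite !hornerE.
Qed.



Definition isP1 (f : pt -> R) : Prop :=
  exists (a : R) (b : 'I_3 -> R), forall x : pt, f x = a + \sum_(i < 3) b i * x ord0 i.

Ltac ex3 := rewrite ?big_ord_recr ?big_ord0 /=.

Lemma P1_P2 f : isP1 f -> isP2 f.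
Proof.
move=> [a [b Hf]]; exists a, b, (fun _ _ => 0) => x.
by rewrite Hf; ex3; ring.
Qed.

Lemma P2_const (k : R) : @isP2 R (fun _ : pt => k).
Proof. by exists k, (fun _ => 0), (fun _ _ => 0) => x; ex3; ring. Qed.

Lemma P2_add {f g : pt -> R} : isP2 f -> isP2 g -> isP2 (fun x => f x + g x).
Proof.
move=> [a [b [c Hf]]] [a' [b' [c' Hg]]].
exists (a + a'), (fun i => b i + b' i), (fun i j => c i j + c' i j) => x.
by rewrite Hf Hg; ex3; ring.
Qed.

Lemma P2_scale (k : R) {f : pt -> R} : isP2 f -> isP2 (fun x => k * f x).
Proof.
move=> [a [b [c Hf]]].
exists (k * a), (fun i => k * b i), (fun i j => k * c i j) => x.
by rewrite Hf; ex3; ring.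
Qed.

Lemma P1_mul {f g : pt -> R} : isP1 f -> isP1 g -> isP2 (fun x => f x * g x).
Proof.
move=> [a [b Hf]] [a' [b' Hg]].
exists (a * a'), (fun i => a * b' i + a' * b i), (fun i j => b i * b' j) => x.
by rewrite Hf Hg; ex3; ring.
Qed.

Lemma P2_ext {f g : pt -> R} : (forall x, f x = g x) -> isP2 f -> isP2 g.
Proof. by move=> Hfg; have -> : f = g by apply/funext. Qed.

Lemma P2_sum n (F : 'I_n -> pt -> R) :
  (forall i, isP2 (F i)) -> isP2 (fun x => \sum_(i < n) F i x).
Proof.
elim: n F => [|n IH] F HF.
  by apply: (P2_ext _ (P2_const 0)) => x; rewrite big_ord0.
have H := P2_add (IH (fun i => F (widen_ord (leqnSn n) i)) (fun i => HF _)) (HF ord_max).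
apply: (P2_ext _ H).
by move=> x; rewrite big_ord_recr.
Qed.

Lemma P1_affine (x0 : pt) (M : 'M[R]_3) (i : 'I_3) :
  isP1 (fun y : pt => (x0 + y *m M) ord0 i).
Proof.
exists (x0 ord0 i), (fun k => M k i) => y.
rewrite !mxE; congr (_ + _); apply: eq_bigr => k _; by rewrite mulrC.
Qed.

Lemma P2_comp (p : pt -> R) (x0 : pt) (M : 'M[R]_3) :
  isP2 p -> isP2 (fun y => p (x0 + y *m M)).
Proof.
move=> [a [b [c Hp]]].
have -> : (fun y => p (x0 + y *m M)) = (fun y => a +
   \sum_(i < 3) (b i * (x0 + y *m M) ord0 i) +
   \sum_(i < 3) \sum_(j < 3) ((c i j * (x0 + y *m M) ord0 i) * (x0 + y *m M) ord0 j)).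
  by apply/funext => y; rewrite Hp.
apply: P2_add; [apply: P2_add|].
- exact: P2_const.
- apply: P2_sum => i; apply: P2_scale; exact/P1_P2/P1_affine.
- apply: P2_sum => i; apply: P2_sum => j.
  apply: (P2_ext _ (P2_scale (c i j) (P1_mul (P1_affine x0 M i) (P1_affine x0 M j)))).
  by move=> y; rewrite mulrA.
Qed.

Lemma plane_quad (p : pt -> R) (x u w : pt) : isP2 p ->
  exists c00 c10 c01 c20 c11 c02 : R, forall s t : R,
    p (x + s *: u + t *: w) =
    c00 + c10 * s + c01 * t + c20 * s ^+ 2 + c11 * s * t + c02 * t ^+ 2.
Proof.
move=> [a [b [c Hp]]].
exists (p x).
exists (\sum_(i < 3) b i * u ord0 i + \sum_(i < 3) \sum_(j < 3)
          c i j * (x ord0 i * u ord0 j + u ord0 i * x ord0 j)).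
exists (\sum_(i < 3) b i * w ord0 i + \sum_(i < 3) \sum_(j < 3)
          c i j * (x ord0 i * w ord0 j + w ord0 i * x ord0 j)).
exists (\sum_(i < 3) \sum_(j < 3) c i j * (u ord0 i * u ord0 j)).
exists (\sum_(i < 3) \sum_(j < 3) c i j * (u ord0 i * w ord0 j + w ord0 i * u ord0 j)).
exists (\sum_(i < 3) \sum_(j < 3) c i j * (w ord0 i * w ord0 j)).
move=> s t; rewrite !Hp; ex3; rewrite !mxE; ring.
Qed.


Definition k0 : 'I_3 := @Ordinal 3 0 isT.
Definition k1 : 'I_3 := @Ordinal 3 1 isT.
Definition k2 : 'I_3 := @Ordinal 3 2 isT.

Lemma sum3 (F : 'I_3 -> R) : \sum_(i < 3) F i = F k0 + F k1 + F k2.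
Proof.
rewrite !big_ord_recr big_ord0 /= add0r.
by congr (F _ + F _ + F _); apply/val_inj.
Qed.

Definition r3 (a b c : R) : pt :=
  \row_(i < 3) (if i == 0 :> nat then a else if i == 1 :> nat then b else c).

Lemma uniq_y (g : pt -> R) : isP2 g ->
  g (r3 0 0 0) = 0 ->
  g (r3 1 0 0) = 0 -> g (r3 0 1 0) = 0 -> g (r3 0 0 1) = 0 ->
  g (r3 (1/2) 0 0) = 0 -> g (r3 0 (1/2) 0) = 0 -> g (r3 0 0 (1/2)) = 0 ->
  g (r3 (1/2) (1/2) 0) = 0 -> g (r3 (1/2) 0 (1/2)) = 0 -> g (r3 0 (1/2) (1/2)) = 0 ->
  forall y, g y = 0.
Proof.
move=> [a [b [c Hg]]]; rewrite !Hg !sum3 !mxE /=.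
move=> H1 H2 H3 H4 H5 H6 H7 H8 H9 H10 y.
have Ea : a = 0 by lra.
have Eb0 : b k0 = 0 by lra.
have Eb1 : b k1 = 0 by lra.
have Eb2 : b k2 = 0 by lra.
have Ec0 : c k0 k0 = 0 by lra.
have Ec1 : c k1 k1 = 0 by lra.
have Ec2 : c k2 k2 = 0 by lra.
have E01 : c k1 k0 = - c k0 k1 by lra.
have E02 : c k2 k0 = - c k0 k2 by lra.
have E12 : c k2 k1 = - c k1 k2 by lra.
rewrite Hg !sum3 Ea Eb0 Eb1 Eb2 Ec0 Ec1 Ec2 E01 E02 E12; ring.
Qed.




Definition mid (a b : pt) : pt := (1/2 : R) *: (a + b).

Lemma face_formula (p : pt -> R) (a b c : pt) : isP2 p ->
  tri_avg a b c p = (p (mid a b) + p (mid b c) + p (mid a c)) / 3.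
Proof.
move=> P2p; have [c00 [c10 [c01 [c20 [c11 [c02 H]]]]]] := @plane_quad _ a (b - a) (c - a) P2p.
rewrite /tri_avg (@tri_quad _ c00 c10 c01 c20 c11 c02) //.
have -> : mid a b = a + (1/2 : R) *: (b - a) + (0 : R) *: (c - a).
  by apply/rowP => l; rewrite !mxE; field.
have -> : mid b c = a + (1/2 : R) *: (b - a) + (1/2 : R) *: (c - a).
  by apply/rowP => l; rewrite !mxE; field.
have -> : mid a c = a + (0 : R) *: (b - a) + (1/2 : R) *: (c - a).
  by apply/rowP => l; rewrite !mxE; field.
by rewrite !H; field.
Qed.

Lemma edge_formula (p : pt -> R) (v : 'I_4 -> pt) (i j : 'I_4) (q : {poly R}) (w : R -> R) :
  isP2 p -> prob_density01 w ->
  (forall a b : R, \int[leb]_(t in `[0, 1]%classic) (q.[t] * (a + b * t) * w t) = 0) ->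
  edge_functional v i j q w p =
  - 2 * \int[leb]_(t in `[0, 1]%classic) (t * (1 - t) * q.[t] * w t)
      * (p (v i) + p (v j) - 2 * p (mid (v i) (v j))).
Proof.
move=> P2p wd Horth.
have [c0 [c1 [c01 [c2 [c11 [c02 H]]]]]] := @plane_quad _ (v i) (v j - v i) 0 P2p.
have Hg : forall t, p (edge_pt v i j t) = c0 + c1 * t + c2 * t ^+ 2.
  move=> t; have -> : edge_pt v i j t = v i + t *: (v j - v i) + (0 : R) *: (0 : pt).
    by apply/rowP => l; rewrite !mxE; ring.
  by rewrite H; ring.
rewrite /edge_functional (@edge_quad _ _ _ _ _ _ wd Horth Hg).
have e0 : v i = v i + (0 : R) *: (v j - v i) + (0 : R) *: (0 : pt).
  by apply/rowP => l; rewrite !mxE; ring.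
have e1 : v j = v i + (1 : R) *: (v j - v i) + (0 : R) *: (0 : pt).
  by apply/rowP => l; rewrite !mxE; ring.
have em : mid (v i) (v j) = v i + (1/2 : R) *: (v j - v i) + (0 : R) *: (0 : pt).
  by apply/rowP => l; rewrite !mxE; field.
have Pi : p (v i) = c0 by rewrite {1}e0 H; ring.
have Pj : p (v j) = c0 + c1 + c2 by rewrite e1 H; ring.
have Pm : p (mid (v i) (v j)) = c0 + c1 / 2 + c2 / 4 by rewrite em H; field.
by rewrite Pi Pj Pm; field.
Qed.



Definition o0 : 'I_4 := @Ordinal 4 0 isT.
Definition o1 : 'I_4 := @Ordinal 4 1 isT.
Definition o2 : 'I_4 := @Ordinal 4 2 isT.
Definition o3 : 'I_4 := @Ordinal 4 3 isT.

Lemma ord4_cases (i : 'I_4) : i = o0 \/ i = o1 \/ i = o2 \/ i = o3.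
Proof.
case: i => [[|[|[|[|n]]]] Hn].
- by left; apply/val_inj.
- by right; left; apply/val_inj.
- by right; right; left; apply/val_inj.
- by right; right; right; apply/val_inj.
- by [].
Qed.

Lemma L0 : (ord0 : 'I_4) = o0. Proof. exact/val_inj. Qed.
Lemma L1 : lift (ord0 : 'I_4) k0 = o1. Proof. exact/val_inj. Qed.
Lemma L2 : lift (ord0 : 'I_4) k1 = o2. Proof. exact/val_inj. Qed.
Lemma L3 : lift (ord0 : 'I_4) k2 = o3. Proof. exact/val_inj. Qed.

Definition Emat (v : 'I_4 -> pt) : 'M[R]_3 :=
  \matrix_(k < 3, l < 3) (v (lift ord0 k) - v ord0) ord0 l.

Lemma node_eq (v : 'I_4 -> pt) (a b c : R) :
  v o0 + r3 a b c *m Emat v =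
  v o0 + a *: (v o1 - v o0) + b *: (v o2 - v o0) + c *: (v o3 - v o0).
Proof.
apply/rowP => l; rewrite !mxE sum3 !mxE /= L1 L2 L3 L0.
have E0 : (ord0 : 'I_1) = 0 by []. rewrite -E0; ring.
Qed.

Lemma uniq_x (v : 'I_4 -> pt) (p : pt -> R) : nondegenerate_tet v -> isP2 p ->
  p (v o0) = 0 -> p (v o1) = 0 -> p (v o2) = 0 -> p (v o3) = 0 ->
  p (mid (v o0) (v o1)) = 0 -> p (mid (v o0) (v o2)) = 0 -> p (mid (v o0) (v o3)) = 0 ->
  p (mid (v o1) (v o2)) = 0 -> p (mid (v o1) (v o3)) = 0 -> p (mid (v o2) (v o3)) = 0 ->
  forall x, p x = 0.
Proof.
move=> nd P2p H0 H1 H2 H3 H01 H02 H03 H12 H13 H23 x.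
pose g := fun y => p (v o0 + y *m Emat v).
have P2g : isP2 g by apply: P2_comp.
have Hu : Emat v \in unitmx by rewrite unitmxE unitfE.
have -> : x = v o0 + ((x - v o0) *m invmx (Emat v)) *m Emat v.
  by rewrite mulmxKV // addrC subrK.
apply: (@uniq_y _ P2g); rewrite /g node_eq.
- transitivity (p (v o0)); last exact H0.
  by congr p; apply/rowP => l; rewrite !mxE; ring.
- transitivity (p (v o1)); last exact H1.
  by congr p; apply/rowP => l; rewrite !mxE; ring.
- transitivity (p (v o2)); last exact H2.
  by congr p; apply/rowP => l; rewrite !mxE; ring.
- transitivity (p (v o3)); last exact H3.
  by congr p; apply/rowP => l; rewrite !mxE; ring.
- transitivity (p (mid (v o0) (v o1))); last exact H01.
  by congr p; apply/rowP => l; rewrite !mxE; field.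
- transitivity (p (mid (v o0) (v o2))); last exact H02.
  by congr p; apply/rowP => l; rewrite !mxE; field.
- transitivity (p (mid (v o0) (v o3))); last exact H03.
  by congr p; apply/rowP => l; rewrite !mxE; field.
- transitivity (p (mid (v o1) (v o2))); last exact H12.
  by congr p; apply/rowP => l; rewrite !mxE; field.
- transitivity (p (mid (v o1) (v o3))); last exact H13.
  by congr p; apply/rowP => l; rewrite !mxE; field.
- transitivity (p (mid (v o2) (v o3))); last exact H23.
  by congr p; apply/rowP => l; rewrite !mxE; field.
Qed.


Lemma sum4 (F : 'I_4 -> R) : \sum_(i < 4) F i = F o0 + F o1 + F o2 + F o3.
Proof.
rewrite !big_ord_recr big_ord0 /= add0r.
by congr (F _ + F _ + F _ + F _); apply/val_inj.
Qed.

Definition ylam (m : 'I_4) (y : pt) : R :=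
  if m == o0 then 1 - y ord0 k0 - y ord0 k1 - y ord0 k2
  else if m == o1 then y ord0 k0 else if m == o2 then y ord0 k1 else y ord0 k2.

Lemma ylam_P1 m : isP1 (ylam m).
Proof.
case: (ord4_cases m) => [->|[->|[->|->]]].
- by exists 1, (fun _ => -1) => y; rewrite sum3 /ylam /=; ring.
- by exists 0, (fun i => if i == k0 then 1 else 0) => y; rewrite sum3 /ylam /=; ring.
- by exists 0, (fun i => if i == k1 then 1 else 0) => y; rewrite sum3 /ylam /=; ring.
- by exists 0, (fun i => if i == k2 then 1 else 0) => y; rewrite sum3 /ylam /=; ring.
Qed.

Definition cc (i j m : 'I_4) : R :=
  if (m == i) || (m == j) then - (2 / 3) else 1 / 3.

Definition Gf (i j : 'I_4) (y : pt) : R :=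
  \sum_(m < 4) cc i j m * ylam m y + 4 * (ylam i y * ylam j y).

Lemma Gf_P2 i j : isP2 (Gf i j).
Proof.
apply: P2_add.
- apply: P2_sum => m; apply: P2_scale; exact/P1_P2/ylam_P1.
- apply: P2_scale; apply: P1_mul; exact: ylam_P1.
Qed.

Definition pf (v : 'I_4 -> pt) (i j : 'I_4) (x : pt) : R :=
  Gf i j ((x - v o0) *m invmx (Emat v)).

Lemma pf_P2 v i j : isP2 (pf v i j).
Proof.
apply: (P2_ext _ (P2_comp _ (- (v o0 *m invmx (Emat v))) (invmx (Emat v)) (Gf_P2 i j))).
by move=> x; rewrite /pf mulmxBl addrC.
Qed.

Lemma pf_node v i j (a b c : R) : nondegenerate_tet v ->
  pf v i j (v o0 + r3 a b c *m Emat v) = Gf i j (r3 a b c).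
Proof.
move=> nd; have Hu : Emat v \in unitmx by rewrite unitmxE unitfE.
by rewrite /pf addrAC subrr add0r mulmxK.
Qed.


Lemma face_o0 v (p : pt -> R) : isP2 p -> face_avg v o0 p =
  (p (mid (v o1) (v o2)) + p (mid (v o2) (v o3)) + p (mid (v o1) (v o3))) / 3.
Proof.
move=> P2p; rewrite /face_avg face_formula //.
have -> : lift o0 0 = o1 by apply/val_inj.
have -> : lift o0 1 = o2 by apply/val_inj.
by have -> : lift o0 2 = o3 by apply/val_inj.
Qed.

Lemma face_o1 v (p : pt -> R) : isP2 p -> face_avg v o1 p =
  (p (mid (v o0) (v o2)) + p (mid (v o2) (v o3)) + p (mid (v o0) (v o3))) / 3.
Proof.
move=> P2p; rewrite /face_avg face_formula //.
have -> : lift o1 0 = o0 by apply/val_inj.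
have -> : lift o1 1 = o2 by apply/val_inj.
by have -> : lift o1 2 = o3 by apply/val_inj.
Qed.

Lemma face_o2 v (p : pt -> R) : isP2 p -> face_avg v o2 p =
  (p (mid (v o0) (v o1)) + p (mid (v o1) (v o3)) + p (mid (v o0) (v o3))) / 3.
Proof.
move=> P2p; rewrite /face_avg face_formula //.
have -> : lift o2 0 = o0 by apply/val_inj.
have -> : lift o2 1 = o1 by apply/val_inj.
by have -> : lift o2 2 = o3 by apply/val_inj.
Qed.

Lemma face_o3 v (p : pt -> R) : isP2 p -> face_avg v o3 p =
  (p (mid (v o0) (v o1)) + p (mid (v o1) (v o2)) + p (mid (v o0) (v o2))) / 3.
Proof.
move=> P2p; rewrite /face_avg face_formula //.
have -> : lift o3 0 = o0 by apply/val_inj.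
have -> : lift o3 1 = o1 by apply/val_inj.
by have -> : lift o3 2 = o2 by apply/val_inj.
Qed.

Lemma pf_at v (i j : 'I_4) (x : pt) (a b c : R) : nondegenerate_tet v ->
  x = v o0 + a *: (v o1 - v o0) + b *: (v o2 - v o0) + c *: (v o3 - v o0) ->
  pf v i j x = Gf i j (r3 a b c).
Proof. by move=> nd ->; rewrite -node_eq pf_node. Qed.

Ltac vec := apply/rowP => l; rewrite !mxE; field.

Lemma construct v (i j : 'I_4) : nondegenerate_tet v -> (i < j)%N ->
  [/\ pf v i j (v i) <> 0,
      (forall m, face_avg v m (pf v i j) = 0) &
      (forall a b : 'I_4, (a < b)%N -> (a != i) || (b != j) ->
         pf v i j (v a) + pf v i j (v b) - 2 * pf v i j (mid (v a) (v b)) = 0)].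
Proof.
move=> nd.
case: (ord4_cases i) => [->|[->|[->|->]]]; case: (ord4_cases j) => [->|[->|[->|->]]] //= _.
all: set I0 := (X in pf v X); set J0 := (X in pf v I0 X).
all: have P2 := pf_P2 v I0 J0.
all: have N0 : pf v I0 J0 (v o0) = Gf I0 J0 (r3 0 0 0) by apply: pf_at => //; vec.
all: have N1 : pf v I0 J0 (v o1) = Gf I0 J0 (r3 1 0 0) by apply: pf_at => //; vec.
all: have N2 : pf v I0 J0 (v o2) = Gf I0 J0 (r3 0 1 0) by apply: pf_at => //; vec.
all: have N3 : pf v I0 J0 (v o3) = Gf I0 J0 (r3 0 0 1) by apply: pf_at => //; vec.
all: have N01 : pf v I0 J0 (mid (v o0) (v o1)) = Gf I0 J0 (r3 (1/2) 0 0) by apply: pf_at => //; vec.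
all: have N02 : pf v I0 J0 (mid (v o0) (v o2)) = Gf I0 J0 (r3 0 (1/2) 0) by apply: pf_at => //; vec.
all: have N03 : pf v I0 J0 (mid (v o0) (v o3)) = Gf I0 J0 (r3 0 0 (1/2)) by apply: pf_at => //; vec.
all: have N12 : pf v I0 J0 (mid (v o1) (v o2)) = Gf I0 J0 (r3 (1/2) (1/2) 0) by apply: pf_at => //; vec.
all: have N13 : pf v I0 J0 (mid (v o1) (v o3)) = Gf I0 J0 (r3 (1/2) 0 (1/2)) by apply: pf_at => //; vec.
all: have N23 : pf v I0 J0 (mid (v o2) (v o3)) = Gf I0 J0 (r3 0 (1/2) (1/2)) by apply: pf_at => //; vec.
all: split.
all: try (rewrite ?N0 ?N1 ?N2 ?N3 /I0 /J0 /Gf !sum4 /cc /ylam !mxE /=; lra).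
all: try (move=> m; case: (ord4_cases m) => [->|[->|[->|->]]];
    rewrite ?face_o0 ?face_o1 ?face_o2 ?face_o3 // ?N0 ?N1 ?N2 ?N3 ?N01 ?N02 ?N03 ?N12 ?N13 ?N23;
    rewrite /I0 /J0 /Gf !sum4 /cc /ylam !mxE /=; field).
all: try by [].
all: move=> a b; case: (ord4_cases a) => [->|[->|[->|->]]]; case: (ord4_cases b) => [->|[->|[->|->]]] //= _ _.
all: rewrite ?N0 ?N1 ?N2 ?N3 ?N01 ?N02 ?N03 ?N12 ?N13 ?N23.
all: rewrite /I0 /J0 /Gf !sum4 /cc /ylam !mxE /=; field.
all: try by [].
Qed.

End Ana.
Arguments Emat {R}.

Theorem theorem4 (R : realType) (v : 'I_4 -> 'rV[R]_3)
    (w : 'I_4 -> 'I_4 -> R -> R) (q : 'I_4 -> 'I_4 -> {poly R}) :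
  nondegenerate_tet v ->
  (forall i j : 'I_4, (i < j)%N -> prob_density01 (w i j)) ->
  (forall i j : 'I_4, (i < j)%N -> (size (q i j) <= 3)%N) ->
  (forall i j : 'I_4, (i < j)%N -> forall a b : R,
      \int[@lebesgue_measure R]_(t in `[0, 1]%classic)
         ((q i j).[t] * (a + b * t) * w i j t) = 0) ->
  (unisolvent_ef v q w <->
   (forall i j : 'I_4, (i < j)%N ->
      \int[@lebesgue_measure R]_(t in `[0, 1]%classic)
         (t * (1 - t) * (q i j).[t] * w i j t) != 0)).
Proof.
move=> nd Hw Hq Horth; split.
- move=> Hu i j ij; apply/negP => /eqP K0.
  have [nz Hfa He] := @construct R v i j nd ij.
  apply: nz; apply: (Hu _ (@pf_P2 R v i j) Hfa) => a b ab.
  rewrite (@edge_formula R _ _ _ _ _ _ (@pf_P2 R v i j) (Hw a b ab) (Horth a b ab)).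
  case: (boolP ((a != i) || (b != j))) => [hab|].
  + by rewrite He // mulr0.
  + by rewrite negb_or !negbK => /andP[/eqP -> /eqP ->]; rewrite K0 mulr0 mul0r.
- move=> HK p P2p Hf He.
  have Hn : forall a b : 'I_4, (a < b)%N ->
      p (v a) + p (v b) - 2 * p (@mid R (v a) (v b)) = 0.
    move=> a b ab; have := He a b ab.
    rewrite (@edge_formula R _ _ _ _ _ _ P2p (Hw a b ab) (Horth a b ab)).
    move/eqP; rewrite !mulf_eq0 (negbTE (HK a b ab)) orbF => /orP[/eqP H|/eqP //].
    by exfalso; lra.
  have e01 := Hn o0 o1 isT; have e02 := Hn o0 o2 isT; have e03 := Hn o0 o3 isT.
  have e12 := Hn o1 o2 isT; have e13 := Hn o1 o3 isT; have e23 := Hn o2 o3 isT.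
  have f0 := Hf o0; rewrite face_o0 // in f0.
  have f1 := Hf o1; rewrite face_o1 // in f1.
  have f2 := Hf o2; rewrite face_o2 // in f2.
  have f3 := Hf o3; rewrite face_o3 // in f3.
  apply: (@uniq_x R v p nd P2p); lra.
Qed.
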